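(* Let $f : 2^V \to \mathbb{Z}_{\ge 0}$ be a connectivity function and $(T,L)$ a branch decomposition of $f$ of width $k$ having $h \ge 1$ edges of width $k$. Let $uv$ be an edge of $T$ with $f(uv)=k$, inducing the bipartition $(W, V\setminus W)$ where $W$ is the set of elements of $V$ mapped to leaves on $u$'s side. If there exists a $W$-improvement, then there exists a $W$-improvement $(C_1,C_2,C_3)$ such that the refinement of $(T,L)$ with $(uv,C_1,C_2,C_3)$ has width at most $k$ and has fewer than $h$ edges of width $k$.
   Context: A connectivity function $f:2^V\to\mathbb{Z}_{\ge0}$ ($V$ finite) satisfies $f(\emptyset)=0$, $f(X)=f(V\setminus X)$, and $f(X\cup Y)+f(X\cap Y)\le f(X)+f(Y)$. A branch decomposition of $f$ is $(T,L)$ with $T$ a tree whose nodes have degree 1 or 3 and $L$ a bijection from $V$ to the leaves of $T$; an edge $e$ of $T$ induces via $T-e$ a bipartition $(X,V\setminus X)$ and has width $f(e)=f(X)$; the width of $(T,L)$ is the maximum edge width. For $W\subseteq V$, a $W$-improvement is a tripartition $(C_1,C_2,C_3)$ of $V$ (pairwise disjoint, possibly empty, union $V$) such that for each $i$: $f(C_i)<f(W)/2$, $f(C_i\cap W)<f(W)$ and $f(C_i\cap (V\setminus W))<f(W)$. A partial branch decomposition is a pair $(T,L)$ with $T$ as before and $L$ an injection from a subset of $V$ into the leaves. The refinement of $(T,L)$ with $(uv,C_1,C_2,C_3)$ is defined as follows: for each $i\in\{1,2,3\}$ take a copy $T_i$ of $T$ with labeling $L$ restricted to $C_i$, let $u_iv_i$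 be the copy of $uv$ in $T_i$, and subdivide $u_iv_i$ by a new node $w_i$; take the disjoint union of $T_1,T_2,T_3$ and add a new node $t$ adjacent to $w_1,w_2,w_3$; finally, repeatedly delete degree-1 nodes that are not labeled and suppress degree-2 nodes (a degree-2 node with neighbors $a,b$ is deleted and replaced by the edge $ab$). *)

(* Defs.v *)
From mathcomp Require Import all_boot.
Set Implicit Arguments. Unset Strict Implicit. Unset Printing Implicit Defensive.

Definition connectivity_function (V : finType) (f : {set V} -> nat) : Prop :=
  [/\ f set0 = 0%N,
      (forall X, f (~: X) = f X) &
      (forall X Y, f (X :|: Y) + f (X :&: Y) <= f X + f Y)].

Section Graphs.
Variable N : finType.
Implicit Types (E : {set {set N}}) (x y : N).

Definition adj E : rel N := fun x y => [set x; y] \in E.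
Definition deg E x : nat := #|[set y | [set x; y] \in E]|.

Definition is_tree E : Prop :=
  [/\ (forall e, e \in E -> #|e| = 2),
      (forall x y, connect (adj E) x y) &
      (forall e a b, e \in E -> e = [set a; b] -> ~~ connect (adj (E :\ e)) a b)].

Variable V : finType.
Implicit Types (L : V -> N) (f : {set V} -> nat).

Definition is_branch_decomp E L : Prop :=
  [/\ is_tree E,
      (forall x, deg E x = 1 \/ deg E x = 3),
      injective L &
      (forall n, deg E n = 1 <-> exists z, L z = n)].

Definition side E L (e : {set N}) (a : N) : {set V} :=
  [set z | connect (adj (E :\ e)) a (L z)].

(* width of an edge e: f of the bipartition induced by T - e
   (both sides give the same value since f is symmetric; we take the max) *)
Definition ewidth f E L (e : {set N}) : nat := \max_(a in e) f (side E L e a).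
Definition width f E L : nat := \max_(e in E) ewidth f E L e.
Definition nwide f E L (k : nat) : nat := #|[set e in E | ewidth f E L e == k]|.
End Graphs.

Definition tripartition (V : finType) (C1 C2 C3 : {set V}) : Prop :=
  [/\ [disjoint C1 & C2], [disjoint C1 & C3], [disjoint C2 & C3]
    & C1 :|: C2 :|: C3 = setT].

Definition improvement (V : finType) (f : {set V} -> nat) (W C1 C2 C3 : {set V}) : Prop :=
  tripartition C1 C2 C3 /\
  forall C, C \in [:: C1; C2; C3] ->
    [/\ (f C).*2 < f W, f (C :&: W) < f W & f (C :\: W) < f W].

(* nodes: inl (n, i) = copy of n in T_i ; inr (Some i) = w_i ; inr None = t *)
Definition rnode (N : finType) : finType := (N * 'I_3 + option 'I_3)%type.

Definition i0 : 'I_3 := @Ordinal 3 0 isT.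
Definition i1 : 'I_3 := @Ordinal 3 1 isT.
Definition i2 : 'I_3 := @Ordinal 3 2 isT.

Section Refine.
Variables (N V : finType).

Definition rcopy (i : 'I_3) (n : N) : rnode N := inl (n, i).
Definition rw (i : 'I_3) : rnode N := inr (Some i).
Definition rt : rnode N := inr None.

(* disjoint union of the three copies, each copy's uv subdivided by w_i,
   plus t adjacent to w_1, w_2, w_3 *)
Definition refine_edges (E : {set {set N}}) (u v : N) : {set {set rnode N}} :=
  \bigcup_(i : 'I_3)
    ([set rcopy i @: (e : {set N}) | e in E :\ [set u; v]] :|:
     [set [set rcopy i u; rw i]; [set rw i; rcopy i v]; [set rw i; rt]]).

Definition refine_lab (L : V -> N) (C1 C2 : {set V}) (z : V) : rnode N :=
  rcopy (if z \in C1 then i0 else if z \in C2 then i1 else i2) (L z).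

(* a graph state: (live nodes, edges) ; lab = set of labeled nodes *)
Definition gstate := ({set rnode N} * {set {set rnode N}})%type.

Inductive red_step (lab : pred (rnode N)) : gstate -> gstate -> Prop :=
| red_delete (x : rnode N) (S : {set rnode N}) E :
    x \in S -> ~~ lab x -> deg E x = 1 ->
    red_step lab (S, E) (S :\ x, [set e in E | x \notin e])
| red_suppress (x a b : rnode N) (S : {set rnode N}) E :
    x \in S -> deg E x = 2 -> a != b -> [set x; a] \in E -> [set x; b] \in E ->
    red_step lab (S, E) (S :\ x, [set e in E | x \notin e] :|: [set [set a; b]]).

Inductive red_star (lab : pred (rnode N)) : gstate -> gstate -> Prop :=
| red_refl s : red_star lab s s
| red_trans s1 s2 s3 : red_step lab s1 s2 -> red_star lab s2 s3 -> red_star lab s1 s3.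

Definition red_terminal (lab : pred (rnode N)) (s : gstate) : Prop :=
  forall x, x \in s.1 -> ~ ((~~ lab x /\ deg s.2 x = 1) \/ deg s.2 x = 2).

Definition is_refinement (E : {set {set N}}) (L : V -> N) (u v : N)
    (C1 C2 C3 : {set V}) (s : gstate) : Prop :=
  let lab := [pred n | n \in codom (refine_lab L C1 C2)] in
  red_star lab (setT, refine_edges E u v) s /\ red_terminal lab s.
End Refine.

(* Main.v *)
Require Import Defs.
From mathcomp Require Import all_boot.
From mathcomp Require Import zify.
Set Implicit Arguments. Unset Strict Implicit. Unset Printing Implicit Defensive.


Section GenGraph.
Variable N : finType.
Implicit Types (E F : {set {set N}}) (x y a b c d p q : N).

Lemma adjC E x y : adj E x y = adj E y x.
Proof. by rewrite /adj setUC. Qed.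

Lemma connectC E x y : connect (adj E) x y = connect (adj E) y x.
Proof. apply: sym_connect_sym => a b; exact: adjC. Qed.

Lemma connect_hom (T : finType) (R : rel N) (R' : rel T) (g : N -> T) :
  (forall x y, R x y -> connect R' (g x) (g y)) ->
  forall x y, connect R x y -> connect R' (g x) (g y).
Proof.
move=> H x y /connectP [s pth ->]; elim: s x pth => [|z s IH] x /=.
  by rewrite connect0.
case/andP => Rxz pz; exact: connect_trans (H _ _ Rxz) (IH _ pz).
Qed.

Lemma connect_inv (R : rel N) (rho : N -> bool) :
  (forall x y, R x y -> rho x = rho y) ->
  forall x y, connect R x y -> rho x = rho y.
Proof.
move=> H x y /connectP [s pth ->]; elim: s x pth => [|z s IH] x //=.
case/andP => Rxz pz; rewrite (H _ _ Rxz); exact: IH.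
Qed.

Lemma connect_mono E F : E \subset F ->
  forall x y, connect (adj E) x y -> connect (adj F) x y.
Proof.
move=> sEF; apply: connect_sub => x y Exy; apply: connect1.
by rewrite /adj (subsetP sEF).
Qed.

Lemma in_pair x y : x \in [set x; y] /\ y \in [set x; y].
Proof. by rewrite !inE !eqxx orbT. Qed.

Lemma set2_eq a b c d : [set a; b] = [set c; d] ->
  (a = c /\ b = d) \/ (a = d /\ b = c).
Proof.
move=> H.
have ha : a \in [set c; d] by rewrite -H (in_pair a b).1.
have hb : b \in [set c; d] by rewrite -H (in_pair a b).2.
have hc : c \in [set a; b] by rewrite H (in_pair c d).1.
have hd : d \in [set a; b] by rewrite H (in_pair c d).2.
move: ha hb hc hd; rewrite !inE.
by do 4 (case/orP => /eqP ?); subst; auto.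
Qed.

Lemma set2_eq1 a b c : [set a; b] = [set a; c] -> b = c.
Proof. by case/set2_eq => [[_ ->] | [-> ->]]. Qed.

Lemma connect_remove E e p q : connect (adj E) p q ->
  connect (adj (E :\ e)) p q \/
  ((exists2 c, c \in e & connect (adj (E :\ e)) p c) /\
   (exists2 c, c \in e & connect (adj (E :\ e)) c q)).
Proof.
move/connectP => [s pth ->]; elim/last_ind: s pth => [|s z IH] /=.
  by rewrite connect0; left.
rewrite rcons_path last_rcons => /andP [/IH {}IH Ez].
have [He | Hne] := eqVneq [set last p s; z] e.
  have [h1 h2] := in_pair (last p s) z; rewrite He in h1 h2.
  right; split; last by exists z => //; exact: connect0.
  case: IH => [C | [//]]; by exists (last p s).
have Ez' : adj (E :\ e) (last p s) z by rewrite /adj !inE Hne.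
case: IH => [C | [H1 [c ce C2]]].
  by left; apply: connect_trans C (connect1 Ez').
right; split => //; exists c => //; exact: connect_trans C2 (connect1 Ez').
Qed.

Definition nbrs E x := [set y | [set x; y] \in E].
Lemma degE E x : deg E x = #|nbrs E x|. Proof. by []. Qed.

Lemma deg1P E x : deg E x = 1 -> exists y, forall z, [set x; z] \in E = (z == y).
Proof.
move=> /eqP; rewrite degE => /cards1P [y Hy]; exists y => z.
have := congr1 (fun A : {set N} => z \in A) Hy; by rewrite /= !inE.
Qed.

Lemma deg2P E x a b : deg E x = 2 -> a != b -> [set x; a] \in E -> [set x; b] \in E ->
  forall z, [set x; z] \in E = (z == a) || (z == b).
Proof.
move=> Hd ab Ha Hb.
have sub : [set a; b] \subset nbrs E x.
  by apply/subsetP => z; rewrite !inE => /orP [] /eqP ->.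
have : [set a; b] == nbrs E x by rewrite eqEcard sub cards2 ab -degE Hd.
move=> /eqP Heq z.
have := congr1 (fun A : {set N} => z \in A) Heq; by rewrite /= !inE => <-.
Qed.

End GenGraph.


Section Reduction.
Variables (M V : finType) (Lp : V -> M) (lab : pred M) (E0 : {set {set M}}).
Hypothesis labL : forall z, lab (Lp z).
Implicit Types (E F : {set {set M}}) (x y a b c d p q : M).

Definition Inv E : Prop :=
  [/\ (forall e, e \in E -> #|e| = 2),
      (forall c d, [set c; d] \in E -> ~~ connect (adj (E :\ [set c; d])) c d),
      (forall n m1 m2, lab n -> [set n; m1] \in E -> [set n; m2] \in E -> m1 = m2)
    & exists phi : {set M} -> {set M},
      [/\ forall e, e \in E -> phi e \in E0,
          {in E &, injective phi} &
          forall e, e \in E -> forall a, a \in e ->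
            exists2 a0, a0 \in phi e & side E Lp e a = side E0 Lp (phi e) a0]].


Lemma card2_neq E x y : (forall e, e \in E -> #|e| = 2) -> [set x; y] \in E -> x != y.
Proof. by move=> H /H; rewrite cards2; case: (x != y). Qed.

Lemma step_delete E x : Inv E -> ~~ lab x -> deg E x = 1 ->
  Inv [set e in E | x \notin e].
Proof.
move=> [I1 I2 I3 [phi [P1 P2 P3]]] nlx /deg1P [y Hy].
set E' := [set e in E | x \notin e].
have sub : E' \subset E by apply/subsetP => e; rewrite inE => /andP [].
have subD e : E' :\ e \subset E :\ e by apply: setSD.
have xy : x != y by apply: (card2_neq I1); rewrite Hy.
split.
- by move=> e /(subsetP sub); apply: I1.
- move=> c d /[dup] cdE' /(subsetP sub) /I2; apply: contra.
  exact: connect_mono.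
- move=> n m1 m2 ln /(subsetP sub) h1 /(subsetP sub) h2; exact: I3 h1 h2.
exists phi; split.
- by move=> e /(subsetP sub) /P1.
- by move=> e1 e2 /(subsetP sub) h1 /(subsetP sub) h2; apply: P2.
move=> e eE' a ae.
have eE : e \in E by apply: (subsetP sub).
have [a0 a0in Hs] := P3 e eE a ae; exists a0 => //; rewrite -Hs.
have xne : x \notin e by move: eE'; rewrite inE => /andP [].
have ax : a != x by apply: contraNneq xne => <-.
apply/setP => z; rewrite !inE; apply/idP/idP; first exact: connect_mono.
have Lx : Lp z != x by apply: contraNneq nlx => <-.
pose g := fun w => if w == x then y else w.
move=> /(connect_hom (R' := adj (E' :\ e)) (g := g)); rewrite /g (negbTE ax) (negbTE Lx).
apply => p q; rewrite /adj !inE => /andP [pqe pqE]; rewrite /g.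
have [px | px] := eqVneq p x.
  subst p; move: pqE; rewrite Hy => /eqP ->; by rewrite if_same connect0.
have [qx | qx] := eqVneq q x.
  subst q; move: pqE; rewrite setUC Hy => /eqP ?; subst p.
  exact: connect0.
apply: connect1; rewrite !inE pqe pqE /=.
by rewrite negb_or eq_sym px eq_sym qx.
Qed.


Lemma step_suppress E x a b : Inv E -> deg E x = 2 -> a != b ->
  [set x; a] \in E -> [set x; b] \in E ->
  Inv ([set e in E | x \notin e] :|: [set [set a; b]]).
Proof.
move=> [I1 I2 I3 [phi [P1 P2 P3]]] dx ab xaE xbE.
have Hn := deg2P dx ab xaE xbE.
have xa : x != a by apply: (card2_neq I1 xaE).
have xb : x != b by apply: (card2_neq I1 xbE).
have axE : [set a; x] \in E by rewrite setUC.
have bxE0 : [set b; x] \in E by rewrite setUC.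
have nlx : ~~ lab x.
  by apply/negP => lx; move: ab; rewrite (I3 _ _ _ lx xaE xbE) eqxx.
set E' := [set e in E | x \notin e] :|: [set [set a; b]].
have xbxa : [set x; b] != [set x; a].
  by apply/negP => /eqP /set2_eq1 /eqP; rewrite eq_sym (negbTE ab).
have bxE : [set b; x] \in E :\ [set x; a] by rewrite setUC !inE xbxa.
have abE : [set a; b] \notin E.
  apply/negP => abE; move: (I2 _ _ xaE); apply/negP/negPn.
  rewrite connectC; apply: (connect_trans (y := b)); apply: connect1.
    rewrite /adj !inE abE andbT; apply/negP => /eqP /set2_eq [[ax _]|[_ bx]].
      by rewrite ax eqxx in xa.
    by rewrite bx eqxx in xb.
  exact: bxE.
have E'P e : e \in E' = ((e \in E) && (x \notin e)) || (e == [set a; b]).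
  by rewrite !inE.
have S1 e p q : e \in E -> x \notin e -> p != x -> q != x ->
    connect (adj (E' :\ e)) p q = connect (adj (E :\ e)) p q.
  move=> eE xe px qx; have abe : [set a; b] != e.
    by apply: contraNneq abE => ->.
  have xae : [set x; a] != e by apply: contraNneq xe => <-; rewrite (in_pair x a).1.
  have xbe : [set x; b] != e by apply: contraNneq xe => <-; rewrite (in_pair x b).1.
  apply/idP/idP.
    apply: connect_sub => p' q'; rewrite /adj !inE => /andP [ne /orP [/andP [hE _]|/eqP hab]].
      by apply: connect1; rewrite /adj !inE ne hE.
    have [[-> ->]|[-> ->]] := set2_eq hab.
      apply: (connect_trans (y := x)); apply: connect1; rewrite /adj !inE ?xbE ?xbe //.
      by rewrite setUC xaE xae.
    apply: (connect_trans (y := x)); apply: connect1; rewrite /adj !inE ?xaE ?xae //.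
    by rewrite setUC xbE xbe.
  pose g := fun w => if w == x then a else w.
  move=> /(connect_hom (R' := adj (E' :\ e)) (g := g)); rewrite /g (negbTE px) (negbTE qx).
  apply => p' q'; rewrite /adj !inE => /andP [pqe pqE]; rewrite /g.
  have [px' | px'] := eqVneq p' x.
    subst p'; move: pqE; rewrite Hn => /orP [] /eqP ->; rewrite ?(negbTE xa) ?(negbTE xb) eq_sym ?(negbTE xa) ?(negbTE xb) ?eqxx.
      exact: connect0.
    by apply: connect1; rewrite /adj !inE abe eqxx orbT.
  have [qx' | qx'] := eqVneq q' x.
    subst q'; move: pqE; rewrite setUC Hn => /orP [] /eqP ->.
      exact: connect0.
    by apply: connect1; rewrite /adj setUC !inE abe eqxx orbT.
  apply: connect1; rewrite /adj !inE pqe pqE /=.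
  by rewrite negb_or eq_sym px' eq_sym qx'.
have subab : E' :\ [set a; b] \subset E :\ [set x; a].
  apply/subsetP => e; rewrite !inE => /andP [ne /orP [/andP [eE xe]|/eqP eab]].
    by rewrite eE andbT; apply: contraNneq xe => ->; rewrite (in_pair x a).1.
  by rewrite eab eqxx in ne.
pose g := fun w => if w == x then b else w.
have S2 p q : connect (adj (E :\ [set x; a])) p q -> connect (adj (E' :\ [set a; b])) (g p) (g q).
  apply: connect_hom => p' q'; rewrite /adj !inE => /andP [pqe pqE]; rewrite /g.
  have [px' | px'] := eqVneq p' x.
    subst p'; move: pqE pqe; rewrite Hn => /orP [] /eqP ->; first by rewrite eqxx.
    by rewrite if_same => _; apply: connect0.
  have [qx' | qx'] := eqVneq q' x.
    subst q'; move: pqE pqe; rewrite setUC Hn => /orP [] /eqP ->; first by rewrite setUC eqxx.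
    by move=> _; apply: connect0.
  apply: connect1; rewrite /adj !inE pqE /= negb_or ![x == _]eq_sym px' qx' /= andbT.
  by apply: contraNneq abE => <-.
have I1' : forall e, e \in E' -> #|e| = 2.
  move=> e; rewrite E'P => /orP [/andP [/I1 //]|/eqP ->].
  by rewrite cards2 ab.
split => //.
- move=> c d; rewrite E'P => /orP [/andP [cdE xcd]|/eqP cdab].
    have cnx : c != x by apply: contraNneq xcd => <-; rewrite (in_pair c d).1.
    have dnx : d != x by apply: contraNneq xcd => <-; rewrite (in_pair c d).2.
    by rewrite S1 // I2.
  rewrite cdab; apply/negP => /(connect_mono subab) C.
  move: (I2 _ _ xaE); apply/negP/negPn.
  have Cab : connect (adj (E :\ [set x; a])) a b.
    by case: (set2_eq cdab) => [[? ?]|[? ?]]; subst c d => //; rewrite connectC.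
  rewrite connectC; apply: connect_trans Cab _; exact: connect1.
- move=> n m1 m2 ln; rewrite !E'P => /orP [/andP [h1 x1]|/eqP h1] /orP [/andP [h2 x2]|/eqP h2].
  + exact: I3 ln h1 h2.
  + have : n \in [set a; b] by rewrite -h2 (in_pair n m2).1.
    rewrite !inE => /orP [] /eqP nab; subst n.
      by have := I3 _ _ _ ln h1 axE => ?; subst m1; rewrite (in_pair a x).2 in x1.
    by have := I3 _ _ _ ln h1 bxE0 => ?; subst m1; rewrite (in_pair b x).2 in x1.
  + have : n \in [set a; b] by rewrite -h1 (in_pair n m1).1.
    rewrite !inE => /orP [] /eqP nab; subst n.
      by have := I3 _ _ _ ln h2 axE => ?; subst m2; rewrite (in_pair a x).2 in x2.
    by have := I3 _ _ _ ln h2 bxE0 => ?; subst m2; rewrite (in_pair b x).2 in x2.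
  + by apply: (@set2_eq1 _ n); rewrite h1 h2.
have Lx z : Lp z != x by apply: contraNneq nlx => <-.
have gL z : g (Lp z) = Lp z by rewrite /g (negbTE (Lx z)).
have ga : g a = a by rewrite /g eq_sym (negbTE xa).
have gx : g x = b by rewrite /g eqxx.
have xbE' : [set x; b] \in E :\ [set x; a] by rewrite !inE xbxa.
have sidea : side E' Lp [set a; b] a = side E Lp [set x; a] a.
  apply/setP => z; rewrite !inE; apply/idP/idP; first exact: connect_mono.
  by move/S2; rewrite ga gL.
have sideb : side E' Lp [set a; b] b = side E Lp [set x; a] x.
  apply/setP => z; rewrite !inE; apply/idP/idP.
    by move/(connect_mono subab); apply: connect_trans; apply: connect1.
  by move/S2; rewrite gx gL.
have abE' : [set a; b] \in E' by rewrite E'P eqxx orbT.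
have E'E e : e \in E' -> e != [set a; b] -> e \in E /\ x \notin e.
  by rewrite E'P => /orP [/andP [] //|->].
exists (fun e => if e == [set a; b] then phi [set x; a] else phi e); split.
- move=> e eE'; case: ifP => [_|/negbT ne]; first exact: P1.
  by have [eE _] := E'E e eE' ne; apply: P1.
- move=> e1 e2 h1 h2 /=.
  case: ifP => [/eqP -> | /negbT n1]; case: ifP => [/eqP -> // | /negbT n2].
  + have [eE xe] := E'E _ h2 n2 => /P2 => /(_ xaE eE) eq.
    by move: xe; rewrite -eq (in_pair x a).1.
  + have [eE xe] := E'E _ h1 n1 => /P2 => /(_ eE xaE) eq.
    by move: xe; rewrite eq (in_pair x a).1.
  + have [eE1 _] := E'E _ h1 n1; have [eE2 _] := E'E _ h2 n2; exact: P2.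
move=> e eE' c ce; case: ifP => [/eqP eab | /negbT ne].
  subst e; move: ce; rewrite !inE => /orP [] /eqP ->.
    by rewrite sidea; apply: P3 => //; rewrite (in_pair x a).2.
  by rewrite sideb; apply: P3 => //; rewrite (in_pair x a).1.
have [eE xe] := E'E _ eE' ne.
have cx : c != x by apply: contraNneq xe => <-.
have -> : side E' Lp e c = side E Lp e c.
  by apply/setP => z; rewrite !inE S1.
exact: P3.
Qed.

End Reduction.

Section Star.
Variables (N V : finType) (Lp : V -> rnode N) (E0 : {set {set rnode N}}).
Let lab := [pred n | n \in codom Lp].

Lemma labL z : lab (Lp z). Proof. by rewrite inE codom_f. Qed.

Lemma star_inv s1 s2 : red_star lab s1 s2 -> Inv Lp lab E0 s1.2 -> Inv Lp lab E0 s2.2.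
Proof.
elim => // {}s1 {}s2 s3 st _ IH H; apply: IH; case: st H => /=.
- move=> x S E _ nl d1 H; apply: step_delete => //; exact: labL.
- move=> x a b S E _ d2 ab ha hb H; apply: step_suppress => //; exact: labL.
Qed.

Lemma inv_ewidth (f : {set V} -> nat) E : Inv Lp lab E0 E ->
  exists phi : {set rnode N} -> {set rnode N},
   [/\ forall e, e \in E -> phi e \in E0, {in E &, injective phi} &
       forall e, e \in E -> ewidth f E Lp e <= ewidth f E0 Lp (phi e)].
Proof.
move=> [_ _ _ [phi [P1 P2 P3]]]; exists phi; split => // e eE.
apply/bigmax_leqP => a ae; have [a0 a0e ->] := P3 e eE a ae.
rewrite /ewidth.
exact: (@leq_bigmax_cond _ (fun a => a \in phi e) (fun a => f (side E0 Lp (phi e) a)) a0 a0e).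
Qed.

Lemma inv_width (f : {set V} -> nat) E k : Inv Lp lab E0 E ->
  (forall e0, e0 \in E0 -> ewidth f E0 Lp e0 <= k) ->
  width f E Lp <= k /\
  nwide f E Lp k <= #|[set e0 in E0 | ewidth f E0 Lp e0 == k]|.
Proof.
move=> /(inv_ewidth f) [phi [P1 P2 P3]] Hk; split.
  by apply/bigmax_leqP => e eE; apply: leq_trans (P3 e eE) (Hk _ (P1 e eE)).
rewrite /nwide -(card_in_imset (f := phi)); last first.
  by move=> e1 e2; rewrite !inE => /andP [h1 _] /andP [h2 _]; apply: P2.
apply: subset_leq_card; apply/subsetP => e0 /imsetP [e]; rewrite !inE => /andP [eE /eqP ew] ->.
rewrite P1 //=; rewrite eqn_leq Hk ?P1 //= -ew; exact: P3.
Qed.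
End Star.


Section Math.
Variables (V : finType).
Implicit Types (A B C W X Y : {set V}).

Lemma disjP A B : [disjoint A & B] <-> (forall z, z \in A -> z \in B -> False).
Proof.
split => [H z za zb|H]; first by move: (disjointFr H za); rewrite zb.
rewrite -setI_eq0; apply/eqP/setP => z; rewrite !inE.
by apply/negP => /andP [za zb]; apply: (H z).
Qed.

Lemma tripP A B C : tripartition A B C <->
  (forall z, (z \in A) + (z \in B) + (z \in C) = 1).
Proof.
split.
  move=> [/disjP d1 /disjP d2 /disjP d3 U] z.
  have : z \in A :|: B :|: C by rewrite U inE.
  rewrite !inE.
  case za: (z \in A); case zb: (z \in B); case zc: (z \in C) => //=.
  - by case: (d1 z).
  - by case: (d1 z).
  - by case: (d2 z).
  - by case: (d3 z).
move=> H; split; try (apply/disjP => z h1 h2; move: (H z); rewrite ?h1 ?h2 /=; lia).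
apply/setP => z; rewrite !inE; move: (H z).
by case: (z \in A); case: (z \in B); case: (z \in C).
Qed.

Variable f : {set V} -> nat.
Hypothesis cf : connectivity_function f.

Lemma fC X : f (~: X) = f X. Proof. by case: cf. Qed.
Lemma fsub X Y : f (X :|: Y) + f (X :&: Y) <= f X + f Y. Proof. by case: cf. Qed.
Lemma fposi X Y : f (X :\: Y) + f (Y :\: X) <= f X + f Y.
Proof.
have := fsub X (~: Y); rewrite fC.
have -> : X :|: ~: Y = ~: (Y :\: X) by rewrite setCD setUC.
rewrite fC -setDE; lia.
Qed.

Definition good W C := [/\ (f C).*2 < f W, f (C :&: W) < f W & f (C :\: W) < f W].

Lemma impP W A B C : improvement f W A B C <->
  [/\ tripartition A B C, good W A, good W B & good W C].
Proof.
split.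
  move=> [T H]; split => //; apply: H; by rewrite !inE eqxx ?orbT.
move=> [T ga gb gc]; split => // D; rewrite !inE => /orP [/eqP ->|/orP [/eqP ->|]] //.
by move=> /eqP ->.
Qed.

Lemma imp12 W A B C : improvement f W A B C -> improvement f W B A C.
Proof.
move=> /impP [/tripP T ga gb gc]; apply/impP; split => //.
by apply/tripP => z; move: (T z); lia.
Qed.

Lemma imp13 W A B C : improvement f W A B C -> improvement f W C B A.
Proof.
move=> /impP [/tripP T ga gb gc]; apply/impP; split => //.
by apply/tripP => z; move: (T z); lia.
Qed.

Lemma goodC W C : good W C -> good (~: W) C.
Proof.
move=> [h1 h2 h3]; split; rewrite fC //; first by rewrite -setDE.
by rewrite setDE setCK.
Qed.

Lemma impC W A B C : improvement f W A B C -> improvement f (~: W) A B C.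
Proof. by move=> /impP [T ga gb gc]; apply/impP; split => //; apply: goodC. Qed.

Definition fs A B C := f A + f B + f C.

Lemma core W A B C X : improvement f W A B C -> X \subset W ->
  f X < f (X :&: A) -> f X <= f (X :\: B) -> f X <= f (X :\: C) ->
  improvement f W (A :|: X) (B :\: X) (C :\: X) /\
  fs (A :|: X) (B :\: X) (C :\: X) < fs A B C.
Proof.
move=> /impP [/tripP T [a1 a2 a3] [b1 b2 b3] [c1 c2 c3]] /subsetP sXW hA hB hC.
have eA : f (A :|: X) < f A.
  have := fsub A X; rewrite setIC; lia.
have eB : f (B :\: X) <= f B by have := fposi B X; lia.
have eC : f (C :\: X) <= f C by have := fposi C X; lia.
split; last by rewrite /fs; lia.
apply/impP; split.
- apply/tripP => z; move: (T z) (sXW z); rewrite !inE.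
  by case: (z \in A); case: (z \in B); case: (z \in C); case: (z \in X).
- split.
  + rewrite -!muln2; lia.
  + have -> : (A :|: X) :&: W = (A :&: W) :|: X.
      apply/setP => z; move: (sXW z); rewrite !inE.
      by case: (z \in A); case: (z \in W); case: (z \in X) => // /(_ isT).
    have := fsub (A :&: W) X.
    have -> : A :&: W :&: X = X :&: A.
      apply/setP => z; move: (sXW z); rewrite !inE.
      by case: (z \in A); case: (z \in W); case: (z \in X) => // /(_ isT).
    lia.
  + have -> : (A :|: X) :\: W = A :\: W.
      apply/setP => z; move: (sXW z); rewrite !inE.
      by case: (z \in A); case: (z \in W); case: (z \in X) => // /(_ isT).
    done.
- split.
  + rewrite -!muln2; lia.
  + have -> : (B :\: X) :&: W = (B :&: W) :\: X.
      apply/setP => z; rewrite !inE.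
      by case: (z \in B); case: (z \in W); case: (z \in X).
    have := fposi (B :&: W) X.
    have -> : X :\: B :&: W = X :\: B.
      apply/setP => z; move: (sXW z); rewrite !inE.
      by case: (z \in B); case: (z \in W); case: (z \in X) => // /(_ isT).
    lia.
  + have -> : (B :\: X) :\: W = B :\: W.
      apply/setP => z; move: (sXW z); rewrite !inE.
      by case: (z \in B); case: (z \in W); case: (z \in X) => // /(_ isT).
    done.
- split.
  + rewrite -!muln2; lia.
  + have -> : (C :\: X) :&: W = (C :&: W) :\: X.
      apply/setP => z; rewrite !inE.
      by case: (z \in C); case: (z \in W); case: (z \in X).
    have := fposi (C :&: W) X.
    have -> : X :\: C :&: W = X :\: C.
      apply/setP => z; move: (sXW z); rewrite !inE.
      by case: (z \in C); case: (z \in W); case: (z \in X) => // /(_ isT).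
    lia.
  + have -> : (C :\: X) :\: W = C :\: W.
      apply/setP => z; move: (sXW z); rewrite !inE.
      by case: (z \in C); case: (z \in W); case: (z \in X) => // /(_ isT).
    done.
Qed.


Lemma stepA W A B C X : improvement f W A B C -> X \subset W -> f X < f (X :&: A) ->
  exists D1 D2 D3, improvement f W D1 D2 D3 /\ fs D1 D2 D3 < fs A B C.
Proof.
move=> hi; move: X.
suff H : forall n X, f X = n -> X \subset W -> f X < f (X :&: A) ->
  exists D1 D2 D3, improvement f W D1 D2 D3 /\ fs D1 D2 D3 < fs A B C.
  by move=> X; apply: H.
have /impP [/tripP T _ _ _] := hi.
elim/ltn_ind => n IH X hn sXW hXA.
have [hB|hB] := ltnP (f (X :\: B)) (f X).
  apply: (IH (f (X :\: B))); [by rewrite -hn | by [] | |].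
    by apply: subset_trans sXW; apply: subsetDl.
  have -> : (X :\: B) :&: A = X :&: A.
    apply/setP => z; move: (T z); rewrite !inE.
    by case: (z \in A); case: (z \in B); case: (z \in C); case: (z \in X).
  lia.
have [hC|hC] := ltnP (f (X :\: C)) (f X).
  apply: (IH (f (X :\: C))); [by rewrite -hn | by [] | |].
    by apply: subset_trans sXW; apply: subsetDl.
  have -> : (X :\: C) :&: A = X :&: A.
    apply/setP => z; move: (T z); rewrite !inE.
    by case: (z \in A); case: (z \in B); case: (z \in C); case: (z \in X).
  lia.
have [h1 h2] := core hi sXW hXA hB hC.
by exists (A :|: X), (B :\: X), (C :\: X).
Qed.

Definition Pb W D1 D2 D3 := [forall X : {set V}, ((X \subset W) || (X \subset ~: W)) ==>
  [&& f (X :&: D1) <= f X, f (X :&: D2) <= f X & f (X :&: D3) <= f X]].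

Lemma stepB W A B C : improvement f W A B C -> ~~ Pb W A B C ->
  exists D1 D2 D3, improvement f W D1 D2 D3 /\ fs D1 D2 D3 < fs A B C.
Proof.
move=> hi; rewrite /Pb negb_forall => /existsP [X]; rewrite negb_imply.
have hiC := impC hi.
have back D1 D2 D3 : improvement f (~: W) D1 D2 D3 -> improvement f W D1 D2 D3.
  by move/impC; rewrite setCK.
have fsP D1 D2 D3 : fs D1 D2 D3 = fs D2 D1 D3 /\ fs D1 D2 D3 = fs D3 D2 D1.
  by rewrite /fs; split; lia.
case/andP => /orP [sX|sX]; rewrite !negb_and -!ltnNge => /orP [h|/orP [h|h]].
- exact: stepA hi sX h.
- have [D1 [D2 [D3 [hD lt]]]] := stepA (imp12 hi) sX h.
  by exists D1, D2, D3; split => //; rewrite (fsP A B C).1.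
- have [D1 [D2 [D3 [hD lt]]]] := stepA (imp13 hi) sX h.
  by exists D1, D2, D3; split => //; rewrite (fsP A B C).2.
- have [D1 [D2 [D3 [hD lt]]]] := stepA hiC sX h.
  by exists D1, D2, D3; split => //; apply: back.
- have [D1 [D2 [D3 [hD lt]]]] := stepA (imp12 hiC) sX h.
  by exists D1, D2, D3; split; [apply: back | rewrite (fsP A B C).1].
- have [D1 [D2 [D3 [hD lt]]]] := stepA (imp13 hiC) sX h.
  by exists D1, D2, D3; split; [apply: back | rewrite (fsP A B C).2].
Qed.

Lemma best W A B C : improvement f W A B C ->
  exists D1 D2 D3, improvement f W D1 D2 D3 /\ Pb W D1 D2 D3.
Proof.
suff H : forall n A B C, fs A B C = n -> improvement f W A B C ->
  exists D1 D2 D3, improvement f W D1 D2 D3 /\ Pb W D1 D2 D3 by apply: H.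
elim/ltn_ind => n IH {}A {}B {}C hn hi.
have [hp|hp] := boolP (Pb W A B C); first by exists A, B, C.
have [D1 [D2 [D3 [hD lt]]]] := stepB hi hp.
by apply: (IH (fs D1 D2 D3)) => //; rewrite -hn.
Qed.

Lemma PbE W D1 D2 D3 X : Pb W D1 D2 D3 -> (X \subset W) || (X \subset ~: W) ->
  [/\ f (X :&: D1) <= f X, f (X :&: D2) <= f X & f (X :&: D3) <= f X].
Proof. by move=> /forallP /(_ X) /implyP H /H /and3P. Qed.

Lemma twoK W A B C X i j : improvement f W A B C -> f X = f W ->
  i \in [:: A; B; C] -> j \in [:: A; B; C] -> i != j ->
  f (X :&: i) = f W -> f (X :&: j) = f W -> False.
Proof.
move=> /impP [/tripP T ga gb gc] hX hi hj ij h1 h2.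
have gi : (f i).*2 < f W.
  by move: hi; rewrite !inE => /orP [/eqP ->|/orP [/eqP ->|/eqP ->]]; [case: ga|case: gb|case: gc].
have gj : (f j).*2 < f W.
  by move: hj; rewrite !inE => /orP [/eqP ->|/orP [/eqP ->|/eqP ->]]; [case: ga|case: gb|case: gc].
have dij : i :&: j = set0.
  move: hi hj ij; rewrite !inE => /orP [/eqP ->|/orP [/eqP ->|/eqP ->]] /orP [/eqP ->|/orP [/eqP ->|/eqP ->]];
    rewrite ?eqxx // => _; apply/setP => z; move: (T z); rewrite !inE;
    by case: (z \in A); case: (z \in B); case: (z \in C).
have s1 := fsub X i; have s2 := fsub X j.
have := fsub (X :|: i) (X :|: j).
have -> : (X :|: i) :&: (X :|: j) = X by rewrite -setUIr dij setU0.
rewrite -!muln2 in gi gj; lia.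
Qed.

End Math.


Section BR.
Variables (M V : finType) (Lp : V -> M) (f : {set V} -> nat).
Hypothesis fC : forall X, f (~: X) = f X.

Lemma ewidth_pair (G : {set {set M}}) c d :
  side G Lp [set c; d] d = ~: side G Lp [set c; d] c ->
  ewidth f G Lp [set c; d] = f (side G Lp [set c; d] c).
Proof.
move=> hd; apply/eqP; rewrite eqn_leq; apply/andP; split.
  apply/bigmax_leqP => a; rewrite !inE => /orP [] /eqP -> //.
  by rewrite hd fC.
exact: (@leq_bigmax_cond _ (fun a => a \in [set c; d]) (fun a => f (side G Lp [set c; d] a)) c (in_pair c d).1).
Qed.

Lemma BR (G : {set {set M}}) c d (rho : pred M) :
  (forall p q, adj (G :\ [set c; d]) p q -> rho p = rho q) ->
  rho c -> ~~ rho d ->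
  (forall q, rho q -> connect (adj (G :\ [set c; d])) c q) ->
  (forall q, ~~ rho q -> connect (adj (G :\ [set c; d])) d q) ->
  [/\ ~~ connect (adj (G :\ [set c; d])) c d,
      side G Lp [set c; d] c = [set z | rho (Lp z)] &
      side G Lp [set c; d] d = ~: [set z | rho (Lp z)]].
Proof.
move=> inv rc rd h3 h4.
have I := connect_inv inv.
split.
- by apply/negP => /I; rewrite rc (negbTE rd).
- apply/setP => z; rewrite !inE; apply/idP/idP; first by move/I <-.
  exact: h3.
- apply/setP => z; rewrite !inE; apply/idP/idP.
    by move/I <-; rewrite (negbTE rd).
  exact: h4.
Qed.
End BR.

Section Tree.
Variables (N V : finType) (E : {set {set N}}) (L : V -> N).
Hypothesis bd : is_branch_decomp E L.

Lemma T1 e : e \in E -> #|e| = 2.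
Proof. by move: bd; rewrite /is_branch_decomp /is_tree => [[[H _ _] _ _ _]]; apply: H. Qed.
Lemma T2 x y : connect (adj E) x y.
Proof. by move: bd; rewrite /is_branch_decomp /is_tree => [[[_ H _] _ _ _]]; apply: H. Qed.
Lemma T3 c d : [set c; d] \in E -> ~~ connect (adj (E :\ [set c; d])) c d.
Proof.
move: bd; rewrite /is_branch_decomp /is_tree => [[[_ _ H] _ _ _]] h.
exact: (H _ _ _ h erefl).
Qed.

Lemma Tpair e : e \in E -> exists c d, c != d /\ e = [set c; d].
Proof. by move/T1/eqP/cards2P. Qed.

Lemma Tsplit c d q : connect (adj (E :\ [set c; d])) c q \/ connect (adj (E :\ [set c; d])) d q.
Proof.
case: (connect_remove [set c; d] (T2 c q)) => [H|[_ [x]]]; first by left.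
by rewrite !inE => /orP [] /eqP -> H; [left|right].
Qed.

Lemma Tcompl c d : [set c; d] \in E ->
  side E L [set c; d] d = ~: side E L [set c; d] c.
Proof.
move=> cdE; apply/setP => z; rewrite !inE.
have B := T3 cdE.
case: (Tsplit c d (L z)) => H.
  rewrite H /=; apply/negP => H2; move/negP: B; apply.
  by apply: connect_trans H _; rewrite connectC.
rewrite H; apply/esym/negP => H2; move/negP: B; apply.
by apply: connect_trans H2 _; rewrite connectC.
Qed.
End Tree.

Section Refined.
Variables (N V : finType) (E : {set {set N}}) (L : V -> N) (u v : N).
Hypothesis bd : is_branch_decomp E L.
Hypothesis uvE : [set u; v] \in E.
Let M := rnode N.
Local Notation wn := (rw N).
Local Notation tn := (rt N).
Let E0 := refine_edges E u v.

Lemma uv_neq : u != v.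
Proof. by have := T1 bd uvE; rewrite cards2; case: (u != v). Qed.

Lemma imset_pair i c d : rcopy i @: [set c; d] = [set rcopy i c; rcopy i d] :> {set M}.
Proof. by rewrite imsetU1 imset_set1. Qed.

Lemma rcopy_inj i j a b : (rcopy i a == rcopy j b :> M) = (i == j) && (a == b).
Proof. by rewrite /rcopy -[inl _ == inl _]/((a, i) == (b, j)) xpair_eqE andbC. Qed.

Lemma E0_cases e0 : e0 \in E0 ->
  (exists i c d, [/\ [set c; d] \in E, [set c; d] != [set u; v] & e0 = [set rcopy i c; rcopy i d]])
  \/ (exists i, [\/ e0 = [set rcopy i u; wn i], e0 = [set wn i; rcopy i v] | e0 = [set wn i; tn]]).
Proof.
move=> /bigcupP [i _]; rewrite !inE => /orP [/imsetP [e]|].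
  rewrite !inE => /andP [ne eE] ->; left.
  have [c [d [_ ecd]]] := Tpair bd eE; subst e.
  by exists i, c, d; split => //; rewrite imset_pair.
by move=> /orP [/orP [/eqP ->|/eqP ->]|/eqP ->]; right; exists i; [constructor 1|constructor 2|constructor 3].
Qed.

Lemma E0_copy i c d : [set c; d] \in E -> [set c; d] != [set u; v] ->
  [set rcopy i c; rcopy i d] \in E0.
Proof.
move=> h1 h2; apply/bigcupP; exists i => //; rewrite inE; apply/orP; left.
by apply/imsetP; exists [set c; d]; rewrite ?imset_pair // !inE h1 h2.
Qed.

Lemma E0_uw i : [set rcopy i u; wn i] \in E0.
Proof. by apply/bigcupP; exists i => //; rewrite !inE eqxx /= orbT. Qed.
Lemma E0_wv i : [set wn i; rcopy i v] \in E0.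
Proof. by apply/bigcupP; exists i => //; rewrite !inE eqxx /= !orbT. Qed.
Lemma E0_wt i : [set wn i; tn] \in E0.
Proof. by apply/bigcupP; exists i => //; rewrite !inE eqxx /= !orbT. Qed.

Lemma E0_ind (Q : M -> M -> Prop) :
  (forall p q, Q p q -> Q q p) ->
  (forall j c d, [set c; d] \in E -> [set c; d] != [set u; v] -> Q (rcopy j c) (rcopy j d)) ->
  (forall j, Q (rcopy j u) (wn j)) -> (forall j, Q (wn j) (rcopy j v)) ->
  (forall j, Q (wn j) tn) ->
  forall p q, [set p; q] \in E0 -> Q p q.
Proof.
move=> Qs H1 H2 H3 H4 p q /E0_cases [[j [c [d [h1 h2 /set2_eq [[-> ->]|[-> ->]]]]]]|[j [] /set2_eq [[-> ->]|[-> ->]]]]; auto.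
Qed.


Lemma lift j (F : {set {set N}}) (K : {set {set M}}) a b :
  (forall c d, [set c; d] \in F -> [set c; d] != [set u; v] -> [set rcopy j c; rcopy j d] \in K) ->
  ([set u; v] \in F -> [set rcopy j u; wn j] \in K /\ [set wn j; rcopy j v] \in K) ->
  connect (adj F) a b -> connect (adj K) (rcopy j a) (rcopy j b).
Proof.
move=> H1 H2; apply: connect_hom => c d cdF.
have [e|ne] := eqVneq [set c; d] [set u; v]; last by apply: connect1; apply: H1.
have [k1 k2] : [set rcopy j u; wn j] \in K /\ [set wn j; rcopy j v] \in K by apply: H2; rewrite -e.
have P : connect (adj K) (rcopy j u) (rcopy j v).
  by apply: (connect_trans (y := wn j)); apply: connect1.
by case: (set2_eq e) => [[-> ->]|[-> ->]] //; rewrite connectC.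
Qed.

Definition bi (i : 'I_3) (p : M) : bool :=
  match p with inl (_, j) => j == i | inr (Some j) => j == i | inr None => true end.

Lemma notin_e0 i (e0 e' : {set M}) p : (forall p, p \in e0 -> bi i p) ->
  p \in e' -> ~~ bi i p -> e' != e0.
Proof. by move=> H pe nb; apply/eqP => ee; move: (H p); rewrite -ee pe (negbTE nb) => /(_ isT). Qed.

Lemma inK i (e0 e' : {set M}) p : (forall p, p \in e0 -> bi i p) ->
  e' \in E0 -> p \in e' -> ~~ bi i p -> e' \in E0 :\ e0.
Proof. by move=> H h1 h2 h3; rewrite !inE h1 andbT; apply: (notin_e0 H h2 h3). Qed.

Lemma reach_t i (e0 : {set M}) : (forall p, p \in e0 -> bi i p) ->
  forall q, ~~ bi i q || (q == tn) -> connect (adj (E0 :\ e0)) tn q.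
Proof.
move=> H q; case: q => [[n j]|[j|]] //=; rewrite /rt /= ?orbF => nb.
  have wtK : [set tn; wn j] \in E0 :\ e0.
    apply: (inK (p := wn j) H); rewrite /= ?nb //; first by rewrite setUC E0_wt.
    by rewrite !inE eqxx ?orbT.
  have uwK : [set wn j; rcopy j u] \in E0 :\ e0.
    apply: (inK (p := wn j) H); rewrite /= ?nb //; first by rewrite setUC E0_uw.
    by rewrite !inE eqxx ?orbT.
  apply: (connect_trans (y := wn j)); first exact: connect1.
  apply: (connect_trans (y := rcopy j u)); first exact: connect1.
  apply: (lift (F := E)); last by apply: (T2 bd).
    move=> c d cdE ne; apply: (inK (p := rcopy j c) H); rewrite /= ?nb //.
      exact: E0_copy.
    by rewrite !inE eqxx.
  move=> _; split.
    by apply: (inK (p := wn j) H); rewrite /= ?nb // ?E0_uw // !inE eqxx ?orbT.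
  by apply: (inK (p := wn j) H); rewrite /= ?nb // ?E0_wv // !inE eqxx ?orbT.
apply: connect1.
apply: (inK (p := wn j) H); rewrite /= ?nb //; first by rewrite setUC E0_wt.
by rewrite !inE eqxx ?orbT.
Qed.


Lemma inK' (e0 e' : {set M}) p : e' \in E0 -> p \in e' -> p \notin e0 -> e' \in E0 :\ e0.
Proof. by move=> h1 h2 h3; rewrite !inE h1 andbT; apply: contraNneq h3 => <-. Qed.

Lemma adj_conn (F : {set {set N}}) a x y : adj F x y ->
  connect (adj F) a x = connect (adj F) a y.
Proof.
move=> h; apply/idP/idP => C; apply: connect_trans C _; apply: connect1 => //.
by rewrite adjC.
Qed.

Lemma rho_inv (e0 : {set M}) (rho : pred M) :
  (forall p q, [set p; q] \in E0 -> [set p; q] != e0 -> rho p = rho q) ->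
  forall p q, adj (E0 :\ e0) p q -> rho p = rho q.
Proof. by move=> H p q; rewrite /adj !inE => /andP [h1 h2]; apply: H. Qed.

Lemma E0_ind' (e0 : {set M}) (rho : pred M) :
  (forall j c d, [set c; d] \in E -> [set c; d] != [set u; v] ->
     [set rcopy j c; rcopy j d] != e0 -> rho (rcopy j c) = rho (rcopy j d)) ->
  (forall j, [set rcopy j u; wn j] != e0 -> rho (rcopy j u) = rho (wn j)) ->
  (forall j, [set wn j; rcopy j v] != e0 -> rho (wn j) = rho (rcopy j v)) ->
  (forall j, [set wn j; tn] != e0 -> rho (wn j) = rho tn) ->
  forall p q, adj (E0 :\ e0) p q -> rho p = rho q.
Proof.
move=> H1 H2 H3 H4; apply: rho_inv; apply: E0_ind => //.
by move=> p q H; rewrite setUC => /H ->.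
Qed.

Lemma ord3 (i : 'I_3) : [\/ i = i0, i = i1 | i = i2].
Proof.
case: i => [[|[|[|m]]] Hi]; [constructor 1|constructor 2|constructor 3|] ; try by apply/val_inj.
by [].
Qed.

Variables (C1 C2 C3 : {set V}).
Hypothesis trip : tripartition C1 C2 C3.
Definition Ci (i : 'I_3) := if i == i0 then C1 else if i == i1 then C2 else C3.
Let Lp := refine_lab L C1 C2.
Definition idx z := if z \in C1 then i0 else if z \in C2 then i1 else i2.
Lemma LpE z : Lp z = rcopy (idx z) (L z). Proof. by []. Qed.

Lemma idxE z i : (idx z == i) = (z \in Ci i).
Proof.
have := (tripP C1 C2 C3).1 trip z; rewrite /idx /Ci.
by case: (ord3 i) => ->; case: (z \in C1); case: (z \in C2); case: (z \in C3).
Qed.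

Lemma kind_wt i :
  let e0 := [set wn i; tn] in
  [/\ ~~ connect (adj (E0 :\ e0)) (wn i) tn,
      side E0 Lp e0 (wn i) = Ci i &
      side E0 Lp e0 tn = ~: Ci i].
Proof.
move=> e0.
have He0 : forall p, p \in e0 -> bi i p by move=> p; rewrite !inE => /orP [] /eqP -> /=.
pose rho := fun p : M => bi i p && (p != tn).
have := @BR _ _ Lp E0 (wn i) tn rho.
have -> : [set z | rho (Lp z)] = Ci i.
  by apply/setP => z; rewrite !inE LpE /rho /= andbT idxE.
apply.
- apply: E0_ind' => //.
  move=> j; rewrite /rho /=; have [-> | //] := eqVneq j i; by rewrite eqxx.
- by rewrite /rho /= eqxx.
- by rewrite /rho eqxx andbF.
- move=> q; case: q => [[n j]|[j|]]; rewrite /rho /= ?andbT //.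
    move=> /eqP ->; apply: (connect_trans (y := rcopy i u)).
      apply: connect1; apply: (inK' (p := rcopy i u)); first by rewrite setUC E0_uw.
        by rewrite !inE eqxx.
      by rewrite !inE.
    apply: (lift (F := E)); last by apply: (T2 bd).
      move=> c d cdE ne; apply: (inK' (p := rcopy i c)); first exact: E0_copy.
        by rewrite !inE eqxx.
      by rewrite !inE.
    by move=> _; split; [apply: (inK' (p := rcopy i u)); [exact: E0_uw | rewrite !inE eqxx | rewrite !inE] |
         apply: (inK' (p := rcopy i v)); [exact: E0_wv | rewrite !inE eqxx orbT | rewrite !inE]].
  by move=> /eqP ->; apply: connect0.
- move=> q nr; apply: (reach_t He0); move: nr; rewrite /rho negb_and negbK.
  by case/orP => -> //; rewrite orbT.
Qed.

Lemma inK'' (e0 e' : {set M}) p : e' \in E0 -> p \in e0 -> p \notin e' -> e' \in E0 :\ e0.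
Proof. by move=> h1 h2 h3; rewrite !inE h1 andbT; apply: contraNneq h3 => ->. Qed.

Lemma kind_aw i a b : [set a; b] = [set u; v] ->
  let e0 := [set rcopy i a; wn i] in
  [/\ ~~ connect (adj (E0 :\ e0)) (rcopy i a) (wn i),
      side E0 Lp e0 (rcopy i a) = Ci i :&: side E L [set u; v] a &
      side E0 Lp e0 (wn i) = ~: (Ci i :&: side E L [set u; v] a)].
Proof.
move=> hab e0.
have He0 : forall p, p \in e0 -> bi i p by move=> p; rewrite !inE => /orP [] /eqP -> /=.
have nab : ~~ connect (adj (E :\ [set u; v])) a b.
  by case: (set2_eq hab) => [[-> ->]|[-> ->]]; [|rewrite connectC]; apply: (T3 bd).
have ab : a != b by apply: contraNneq nab => ->; apply: connect0.
have oth x : x \in [set u; v] -> x != a -> x = b.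
  by rewrite -hab !inE => /orP [] /eqP -> //; rewrite eqxx.
have e0E : e0 \in E0.
  rewrite /e0; case: (set2_eq hab) => [[-> _]|[-> _]]; first exact: E0_uw.
  by rewrite setUC; apply: E0_wv.
have wbE : [set wn i; rcopy i b] \in E0.
  case: (set2_eq hab) => [[_ ->]|[_ ->]]; first exact: E0_wv.
  by rewrite setUC; apply: E0_uw.
pose rho := fun p : M => if p is inl (n, j) then (j == i) && connect (adj (E :\ [set u; v])) a n else false.
have rx x j : x \in [set u; v] -> [set rcopy j x; wn j] != e0 -> rho (rcopy j x) = false.
  move=> xuv ne; rewrite /rho /=; have [ji|//] := eqVneq j i; subst j.
  have [xa|xa] := eqVneq x a; first by rewrite xa eqxx in ne.
  by rewrite (oth x xuv xa) (negbTE nab).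
have := @BR _ _ Lp E0 (rcopy i a) (wn i) rho.
have -> : [set z | rho (Lp z)] = Ci i :&: side E L [set u; v] a.
  by apply/setP => z; rewrite !inE LpE /rho /= idxE.
apply.
- apply: E0_ind' => //.
  + move=> j c d cdE ne _; rewrite /rho /=; case: (j == i) => //=.
    by apply: adj_conn; rewrite /adj !inE ne cdE.
  + by move=> j ne; rewrite rx // !inE eqxx.
  + by move=> j ne; rewrite rx // ?inE ?eqxx ?orbT // setUC.
- by rewrite /rho /= eqxx connect0.
- by [].
- move=> [[n j]|//]; rewrite /rho /= => /andP [/eqP -> C].
  apply: (lift (F := E :\ [set u; v])) => //; last by rewrite !inE eqxx.
  move=> c d cdE ne; apply: (inK'' (p := wn i)); first by apply: E0_copy; move: cdE; rewrite !inE => /andP [].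
    by rewrite !inE eqxx orbT.
  by rewrite !inE.
- have wt : connect (adj (E0 :\ e0)) (wn i) tn.
    apply: connect1; apply: (inK' (p := tn)); [exact: E0_wt | by rewrite !inE eqxx orbT | by rewrite !inE].
  move=> [[n j]|[j|]]; rewrite /rho /=.
  + have [ji|nji] := eqVneq j i => /= C.
      subst j; apply: (connect_trans (y := rcopy i b)).
        apply: connect1; apply: (inK' (p := rcopy i b)) => //; first by rewrite !inE eqxx orbT.
        by rewrite !inE negb_or rcopy_inj eqxx eq_sym ab.
      apply: (lift (F := E :\ [set u; v])) => //; last first.
        by case: (Tsplit bd a b n); rewrite hab => Cs //; rewrite Cs in C.
        by rewrite !inE eqxx.
      move=> c d cdE ne; apply: (inK'' (p := wn i)); first by apply: E0_copy; move: cdE; rewrite !inE => /andP [].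
        by rewrite !inE eqxx orbT.
      by rewrite !inE.
    apply: connect_trans wt _; apply: (reach_t He0); by rewrite /= nji.
  + have [->|nji] := eqVneq j i => _; first exact: connect0.
    apply: connect_trans wt _; apply: (reach_t He0); by rewrite /= nji.
  + by move=> _.
Qed.

Lemma kind_cp i c d : [set c; d] \in E -> [set c; d] != [set u; v] ->
  ~~ connect (adj (E :\ [set c; d])) c u ->
  let e0 := [set rcopy i c; rcopy i d] in
  [/\ ~~ connect (adj (E0 :\ e0)) (rcopy i c) (rcopy i d),
      side E0 Lp e0 (rcopy i c) = Ci i :&: side E L [set c; d] c &
      side E0 Lp e0 (rcopy i d) = ~: (Ci i :&: side E L [set c; d] c)].
Proof.
move=> cdE ne ncu e0.
have He0 : forall p, p \in e0 -> bi i p by move=> p; rewrite !inE => /orP [] /eqP -> /=.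
have ncd := T3 bd cdE.
have uvK : [set u; v] \in E :\ [set c; d] by rewrite !inE uvE andbT eq_sym.
have ncv : ~~ connect (adj (E :\ [set c; d])) c v.
  apply: contra ncu => C; apply: connect_trans C _; apply: connect1.
  by rewrite /adj setUC.
have dU : connect (adj (E :\ [set c; d])) d u.
  by case: (Tsplit bd c d u) => // C; rewrite C in ncu.
have pinj c' d' : [set rcopy i c'; rcopy i d'] = e0 -> [set c'; d'] = [set c; d].
  by case/set2_eq => [[[->] [->]]|[[->] [->]]] //; apply: setUC.
have e0E : e0 \in E0 by apply: E0_copy.
have ltK x y : connect (adj (E :\ [set c; d])) x y -> connect (adj (E0 :\ e0)) (rcopy i x) (rcopy i y).
  apply: lift.
    move=> c' d'; rewrite !inE => /andP [n1 h1] n2; rewrite E0_copy // andbT.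
    by apply: contra n1 => /eqP /pinj ->.
  move=> _; split.
    by apply: (inK' (p := wn i)); [exact: E0_uw | rewrite !inE eqxx orbT | rewrite !inE].
  by apply: (inK' (p := wn i)); [exact: E0_wv | rewrite !inE eqxx | rewrite !inE].
pose rho := fun p : M => if p is inl (n, j) then (j == i) && connect (adj (E :\ [set c; d])) c n else false.
have := @BR _ _ Lp E0 (rcopy i c) (rcopy i d) rho.
have -> : [set z | rho (Lp z)] = Ci i :&: side E L [set c; d] c.
  by apply/setP => z; rewrite !inE LpE /rho /= idxE.
apply.
- apply: E0_ind' => //.
  + move=> j c' d' h1 h2 h3; rewrite /rho /=; have [ji|//] := eqVneq j i; subst j => /=.
    apply: adj_conn; rewrite /adj !inE h1 andbT.
    by apply: contraNneq h3 => e; rewrite /e0 -imset_pair e imset_pair.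
  + by move=> j _; rewrite /rho /= (negbTE ncu) andbF.
  + by move=> j _; rewrite /rho /= (negbTE ncv) andbF.
- by rewrite /rho /= eqxx connect0.
- by rewrite /rho /= eqxx.
- by move=> [[n j]|//]; rewrite /rho /= => /andP [/eqP -> C]; apply: ltK.
- have uw : connect (adj (E0 :\ e0)) (rcopy i d) (wn i).
    apply: connect_trans (ltK _ _ dU) _; apply: connect1.
    by apply: (inK' (p := wn i)); [exact: E0_uw | rewrite !inE eqxx orbT | rewrite !inE].
  have wt : connect (adj (E0 :\ e0)) (rcopy i d) tn.
    apply: connect_trans uw _; apply: connect1.
    by apply: (inK' (p := tn)); [exact: E0_wt | rewrite !inE eqxx orbT | rewrite !inE].
  move=> [[n j]|[j|]]; rewrite /rho /=.
  + have [ji|nji] := eqVneq j i => /= C.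
      subst j; apply: ltK.
      by case: (Tsplit bd c d n) => // Cs; rewrite Cs in C.
    by apply: connect_trans wt _; apply: (reach_t He0); rewrite /= nji.
  + have [->|nji] := eqVneq j i => _; first exact: uw.
    by apply: connect_trans wt _; apply: (reach_t He0); rewrite /= nji.
  + by move=> _.
Qed.

Lemma far c d : [set c; d] \in E ->
  ~~ connect (adj (E :\ [set c; d])) c u \/ ~~ connect (adj (E :\ [set c; d])) d u.
Proof.
move=> cdE; have := T3 bd cdE.
case Hc: (connect _ c u); case Hd: (connect _ d u); auto.
move/negP; case; apply: connect_trans Hc _; by rewrite connectC.
Qed.

Lemma E0_I1 e0 : e0 \in E0 -> #|e0| = 2.
Proof.
case/E0_cases => [[i [c [d [cdE _ ->]]]]|[i [] ->]]; rewrite cards2 //.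
by rewrite rcopy_inj eqxx /=; have := T1 bd cdE; rewrite cards2; case: (c != d).
Qed.

Lemma E0_I2 c d : [set c; d] \in E0 -> ~~ connect (adj (E0 :\ [set c; d])) c d.
Proof.
move: c d; apply: (E0_ind (Q := fun c d => ~~ connect (adj (E0 :\ [set c; d])) c d)).
- by move=> p q; rewrite setUC connectC.
- move=> j c' d' h1 h2; case: (far h1) => H; first by case: (kind_cp j h1 h2 H).
  rewrite setUC connectC; rewrite setUC in h1 h2 H.
  by case: (kind_cp j h1 h2 H).
- by move=> j; case: (kind_aw j (erefl [set u; v])).
- move=> j; rewrite setUC connectC.
  by case: (kind_aw j (setUC [set v] [set u])).
- by move=> j; case: (kind_wt j).
Qed.

Lemma leaf_nbr z : exists y, forall m, [set L z; m] \in E = (m == y).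
Proof.
apply: deg1P; move: bd; rewrite /is_branch_decomp => [[_ _ _ H]].
by apply/H; exists z.
Qed.

Lemma E0_I3 z m : [set Lp z; m] \in E0 ->
  forall y, (forall m, [set L z; m] \in E = (m == y)) ->
  m = if [set L z; y] == [set u; v] then wn (idx z) else rcopy (idx z) y.
Proof.
rewrite LpE => H y Hy; case/E0_cases: H => [[i [c [d [cdE ne]]]]|[i []]] /set2_eq.
- case => [[[e1 e2] ->]|[[e1 e2] ->]]; rewrite -e2.
    by move: cdE ne; rewrite -e1 Hy => /eqP -> /negbTE ->.
  move: cdE ne; rewrite -e1 setUC Hy => /eqP -> /negbTE.
  by rewrite setUC => ->.
- case => [[[e1 e2] ->]|[//]]; rewrite -e2.
  by move: uvE; rewrite -e1 Hy => /eqP <-; rewrite e1 eqxx.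
- case => [[//]|[[e1 e2] ->]]; rewrite -e2.
  by move: uvE; rewrite setUC -e1 Hy => /eqP <-; rewrite e1 setUC eqxx.
- by case => [[]|[]].
Qed.

Lemma E0_inv : Inv Lp [pred n | n \in codom Lp] E0 E0.
Proof.
split.
- exact: E0_I1.
- exact: E0_I2.
- move=> n m1 m2; rewrite inE => /codomP [z ->] h1 h2.
  have [y Hy] := leaf_nbr z.
  by rewrite (E0_I3 h1 Hy) (E0_I3 h2 Hy).
exists id; split.
  by [].
  by move=> e1 e2 h1 h2.
by move=> e _ a ae; exists a.
Qed.

Variable f : {set V} -> nat.
Hypothesis fCh : forall X, f (~: X) = f X.

Lemma E0_width e0 : e0 \in E0 ->
  (exists i c d, [/\ [set c; d] \in E, [set c; d] != [set u; v],
      ~~ connect (adj (E :\ [set c; d])) c u, e0 = [set rcopy i c; rcopy i d] &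
      ewidth f E0 Lp e0 = f (Ci i :&: side E L [set c; d] c)])
  \/ (exists i, [\/ ewidth f E0 Lp e0 = f (Ci i :&: side E L [set u; v] u),
                   ewidth f E0 Lp e0 = f (Ci i :&: side E L [set u; v] v)
                 | ewidth f E0 Lp e0 = f (Ci i)]).
Proof.
case/E0_cases => [[i [c [d [cdE ne ->]]]]|[i [] ->]].
- left; case: (far cdE) => H.
    exists i, c, d; split => //; case: (kind_cp i cdE ne H) => _ h1 h2.
    by rewrite (ewidth_pair fCh); [rewrite h1 | rewrite h2 h1].
  rewrite setUC in cdE ne H.
  exists i, d, c; split => //; first by rewrite setUC.
  case: (kind_cp i cdE ne H) => _ h1 h2.
  by rewrite setUC (ewidth_pair fCh); [rewrite h1 | rewrite h2 h1].
- right; exists i; constructor 1; case: (kind_aw i (erefl [set u; v])) => _ h1 h2.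
  by rewrite (ewidth_pair fCh); [rewrite h1 | rewrite h2 h1].
- right; exists i; constructor 2; case: (kind_aw i (setUC [set v] [set u])) => _ h1 h2.
  by rewrite setUC (ewidth_pair fCh); [rewrite h1 | rewrite h2 h1].
- right; exists i; constructor 3; case: (kind_wt i) => _ h1 h2.
  by rewrite (ewidth_pair fCh); [rewrite h1 | rewrite h2 h1].
Qed.

End Refined.


Lemma side_sub (N V : finType) (E : {set {set N}}) (L : V -> N) u v c d :
  is_branch_decomp E L -> [set u; v] \in E -> [set c; d] \in E -> [set c; d] != [set u; v] ->
  ~~ connect (adj (E :\ [set c; d])) c u ->
  (side E L [set c; d] c \subset side E L [set u; v] u) \/
  (side E L [set c; d] c \subset ~: side E L [set u; v] u).
Proof.
move=> bd uvE cdE ne ncu.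
have uvK : [set u; v] \in E :\ [set c; d] by rewrite !inE uvE andbT eq_sym.
have ncv : ~~ connect (adj (E :\ [set c; d])) c v.
  apply: contra ncu => C; apply: connect_trans C _; apply: connect1.
  by rewrite /adj setUC.
have key x z : connect (adj (E :\ [set u; v])) x c -> z \in side E L [set c; d] c ->
    connect (adj (E :\ [set u; v])) x (L z).
  move=> xc; rewrite inE => /(connect_remove [set u; v]) [C|[[y]]].
    apply: connect_trans xc _; apply: connect_mono C.
    by apply/subsetP => e; rewrite !inE => /and3P [-> _ ->].
  rewrite !inE => /orP [] /eqP -> /(connect_mono (subsetDl _ _)) C.
    by rewrite C in ncu.
  by rewrite C in ncv.
case: (Tsplit bd u v c) => H; [left|right]; apply/subsetP => z zX.
  by rewrite inE; apply: key.
by rewrite -(Tcompl bd uvE) inE; apply: key.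
Qed.

Unset Implicit Arguments. Set Strict Implicit.

Theorem theorem4 (V N : finType) (f : {set V} -> nat) (E : {set {set N}})
    (L : V -> N) (k h : nat) (u v : N) :
  connectivity_function f ->
  is_branch_decomp E L ->
  width f E L = k ->
  nwide f E L k = h ->
  1 <= h ->
  [set u; v] \in E ->
  ewidth f E L [set u; v] = k ->
  let W := side E L [set u; v] u in
  (exists C1 C2 C3, improvement f W C1 C2 C3) ->
  exists C1 C2 C3, improvement f W C1 C2 C3 /\
    forall s, is_refinement E L u v C1 C2 C3 s ->
      width f s.2 (refine_lab L C1 C2) <= k /\
      nwide f s.2 (refine_lab L C1 C2) k < h.
Proof.
move=> cf bd wk nh h1 uvE ewk W [C1 [C2 [C3 Himp]]].
have fC := fC cf.
have fW : f W = k by rewrite -ewk (ewidth_pair fC) // (Tcompl bd uvE).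
have [D1 [D2 [D3 [Dimp DP]]]] := best cf Himp.
exists D1, D2, D3; split => // s [hs _].
have /impP [trip g1 g2 g3] := Dimp.
set Lp := refine_lab L D1 D2.
set E0 := refine_edges E u v.
have Is := star_inv hs (E0_inv bd uvE trip).
have kpos : 0 < k by case: g1; rewrite fW -muln2; lia.
have CiD i : Ci D1 D2 D3 i \in [:: D1; D2; D3].
  by rewrite /Ci; case: (ord3 i) => ->; rewrite !inE eqxx ?orbT.
have goodCi i : good f W (Ci D1 D2 D3 i).
  by rewrite /Ci; case: (ord3 i) => -> /=.
have CiI i j : i != j -> Ci D1 D2 D3 i :&: Ci D1 D2 D3 j = set0.
  move=> ij; apply/setP => z; rewrite !inE -!(idxE trip).
  by apply/negP => /andP [/eqP -> /eqP e]; rewrite e eqxx in ij.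
have widthT e : e \in E -> ewidth f E L e <= k.
  by move=> eE; rewrite -wk; apply: (@leq_bigmax_cond _ (fun e => e \in E) (fun e => ewidth f E L e) e eE).
have cpb (j0 : 'I_3) c d : [set c; d] \in E -> [set c; d] != [set u; v] ->
    ~~ connect (adj (E :\ [set c; d])) c u ->
    f (Ci D1 D2 D3 j0 :&: side E L [set c; d] c) <= f (side E L [set c; d] c) /\
    f (side E L [set c; d] c) = ewidth f E L [set c; d].
  move=> cdE ne ncu; split; last by rewrite (ewidth_pair fC) // (Tcompl bd cdE).
  have sX : (side E L [set c; d] c \subset W) || (side E L [set c; d] c \subset ~: W).
    by case: (side_sub bd uvE cdE ne ncu) => ->; rewrite ?orbT.
  have [q1 q2 q3] := PbE DP sX.
  by rewrite setIC; move: (CiD j0); rewrite !inE => /orP [/eqP ->|/orP [/eqP ->|/eqP ->]].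
have E0b e0 : e0 \in E0 -> ewidth f E0 Lp e0 <= k.
  case/(E0_width bd uvE trip fC) => [[i [c [d [cdE ne ncu -> ->]]]]|[i []] ->].
  - have [q1 q2] := cpb i c d cdE ne ncu; have := widthT _ cdE; lia.
  - by case: (goodCi i) => _ + _; rewrite setIC fW; apply: ltnW.
  - case: (goodCi i) => _ _; rewrite (Tcompl bd uvE) -setDE fW.
    by move=> /ltnW.
  - by case: (goodCi i); rewrite fW -muln2 => ? _ _; lia.
have [Hw Hn] := inv_width (f := f) Is E0b.
split => //; apply: leq_ltn_trans Hn _.
set S0 := [set e0 in E0 | ewidth f E0 Lp e0 == k].
pose psi := fun e0 : {set rnode N} => [set n | [exists j, rcopy j n \in e0]].
have psiE i c d : psi [set rcopy i c; rcopy i d] = [set c; d].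
  apply/setP => n; rewrite !inE; apply/existsP/orP.
    by move=> [j]; rewrite !inE !rcopy_inj => /orP [] /andP [_ ->]; auto.
  by move=> H; exists i; rewrite !inE !rcopy_inj eqxx /=; case/orP: H => ->; rewrite ?orbT.
have S0P e0 : e0 \in S0 -> exists i c d, [/\ [set c; d] \in E, [set c; d] != [set u; v],
    ~~ connect (adj (E :\ [set c; d])) c u, e0 = [set rcopy i c; rcopy i d] &
    f (Ci D1 D2 D3 i :&: side E L [set c; d] c) = k /\ f (side E L [set c; d] c) = k].
  rewrite inE => /andP [e0E /eqP ek]; move: ek.
  case/(E0_width bd uvE trip fC): e0E => [[i [c [d [cdE ne ncu -> ->]]]]|[i []] ->] ek.
  - exists i, c, d; split => //.
    have [q1 q2] := cpb i c d cdE ne ncu; have := widthT _ cdE; lia.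
  - by case: (goodCi i) => _ H _; move: H; rewrite /W ek -/W fW ltnn.
  - move: ek; rewrite (Tcompl bd uvE) -setDE => ek.
    by case: (goodCi i) => _ _; rewrite /W ek -/W fW ltnn.
  - by case: (goodCi i); rewrite fW -muln2 ek => ? _ _; lia.
have inj : {in S0 &, injective psi}.
  move=> e1 e2 /S0P [i [c [d [cdE ne ncu -> [k1 x1]]]]] /S0P [i' [c' [d' [cdE' ne' ncu' -> [k2 x2]]]]].
  rewrite !psiE => hcd.
  have [cc dd] : c = c' /\ d = d'.
    case: (set2_eq hcd) => [//|[q1 q2]]; subst c' d'.
    rewrite setUC in ncu'.
    by case: (Tsplit bd c d u) => C; [rewrite C in ncu | rewrite C in ncu'].
  subst c' d'; have [->|ii] := eqVneq i i'; first done.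
  exfalso.
  have [eCi|nCi] := eqVneq (Ci D1 D2 D3 i) (Ci D1 D2 D3 i').
    move: (CiI i i' ii) k1; rewrite eCi setIid => ->; rewrite set0I.
    by case: cf => -> _ _; lia.
  apply: (twoK cf (X := side E L [set c; d] c) Dimp _ (CiD i) (CiD i') nCi).
  - by rewrite x1 fW.
  - by rewrite setIC k1 fW.
  - by rewrite setIC k2 fW.
have img : psi @: S0 \subset [set e in E | ewidth f E L e == k] :\ [set u; v].
  apply/subsetP => e /imsetP [e0 /S0P [i [c [d [cdE ne ncu -> [k1 x1]]]]] ->].
  rewrite psiE !inE ne cdE /=.
  by have [_ <-] := cpb i c d cdE ne ncu; rewrite x1.
rewrite -(card_in_imset inj).
apply: leq_ltn_trans (subset_leq_card img) _.
have := cardsD1 [set u; v] [set e in E | ewidth f E L e == k].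
rewrite !inE uvE ewk eqxx /=; rewrite /nwide in nh; rewrite nh => ->; rewrite add1n ltnSn.
done.
Qed.
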